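(* Assume $M$ has genus zero. Then the law of $\omega$ under $\mathbf P$ stochastically dominates the $\mathrm{FK}(q)$ random cluster model on $\mathsf G$ with parameter $p=1-b$ and free boundary conditions (the measure on $\xi\subseteq\mathsf E$ proportional to $q^{k(\xi)}p^{|\xi|}(1-p)^{|\mathsf E\setminus\xi|}$). Analogously, the law of $\omega'$ stochastically dominates the $\mathrm{FK}(q')$ random cluster model on $\mathsf G^*$ with parameter $1-a$.
   Context: $M$ is the sphere or the plane. Let $\mathsf G=(\mathsf V,\mathsf E)$ be a finite connected graph embedded in $M$ with all faces topological discs, and $\mathsf G^*=(\mathsf U,\mathsf E^* )$ its embedded dual ($\mathsf U$ = faces of $\mathsf G$); $e^*$ is the dual edge crossing $e$, $\xi^*=\{e^*:e\in\xi\}$. Fix integers $q,q'\ge1$, finite $Q,Q'\subset\mathbb C$ with $Q=-Q$, $Q'=-Q'$, $|Q|=q$, $|Q'|=q'$, and $a,b\in(0,1]$. For $\sigma:\mathsf V\to Q$, $\eta(\sigma)\subseteq\mathsf E^*$ is the set of $e^*$ whose primal $e$ has endpoints with different $\sigma$-values; for $\sigma':\mathsf U\to Q'$, $\eta(\sigma')\subseteq\mathsf E$ is the set of $e$ whose dual $e^*$ has endpoints with different $\sigma'$-values. $\mathbf P(\sigma,\sigma')\propto a^{|\eta(\sigma')|}b^{|\eta(\sigma)|}$ on $\Sigma=\{(\sigma,\sigma'):\eta(\sigma)^*\cap\eta(\sigma')=\emptyset\}$. Percolation: given $(\sigma,\sigma')$, every edge of $\eta(\sigma')$ and every dual edge of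 $\eta(\sigma)$ is open; for each pair $(e,e^* )$ with $e\notin\eta(\sigma')$, $e^*\notin\eta(\sigma)$, independently: if $a+b\le1$, ($e$ open, $e^*$ closed) w.p. $a$, ($e$ closed, $e^*$ open) w.p. $b$, both open w.p. $1-a-b$; if $a+b\ge1$, ($e$ open, $e^*$ closed) w.p. $1-b$, ($e$ closed, $e^*$ open) w.p. $1-a$, both closed w.p. $a+b-1$. $\omega$, $\omega'$ are the sets of open primal and dual edges. $k(\xi)$ is the number of connected components of $(\mathsf V,\xi)$ (for dual configurations, of $(\mathsf U,\xi)$), isolated vertices included. Stochastic domination is with respect to inclusion of edge sets. *)

(* Defs.v *)
From HB Require Import structures.
From mathcomp Require Import all_boot all_order all_algebra.
From mathcomp Require Import fingroup perm finmap.
From mathcomp Require Import complex.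
From mathcomp Require Import reals.
Set Implicit Arguments. Unset Strict Implicit. Unset Printing Implicit Defensive.
Import Order.TTheory GRing.Theory Num.Theory.
Local Open Scope ring_scope.

(* A finite connected graph cellularly embedded in the sphere, encoded   *)
(* as a combinatorial map (rotation system) of Euler characteristic 2.   *)
(* D = darts (half-edges), alpha = the edge involution, sigma = rotation *)
(* around vertices; faces are the orbits of  d |-> sigma (alpha d).      *)
(* V, E, U are the types of vertices, edges, faces, identified with the  *)
(* respective orbits through the surjections vert, edge, face.           *)
(* The dual edge e^* of e is indexed by e itself: it joins the faces     *)
(* face d and face (alpha d) for any dart d of e.                        *)

Definition face_perm (D : finType) (alpha sigma : {perm D}) : D -> D :=
  fun d => sigma (alpha d).

Definition planar_map (D V E U : finType) (alpha sigma : {perm D})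
  (vert : D -> V) (edge : D -> E) (face : D -> U) : Prop :=
  (forall d, alpha (alpha d) = d /\ alpha d != d) /\
  (forall d d', vert d = vert d' <-> fconnect sigma d d') /\
  (forall d d', edge d = edge d' <-> (d' = d \/ d' = alpha d)) /\
  (forall d d', face d = face d' <-> fconnect (face_perm alpha sigma) d d') /\
  (forall v, exists d, vert d = v) /\ (forall e, exists d, edge d = e) /\
  (forall u, exists d, face d = u) /\
  (forall d d', connect (fun x y => (y == alpha x) || (y == sigma x)) d d') /\
  (* genus zero: Euler's formula V - E + F = 2 *)
  (#|V| + #|U| = #|E| + 2)%N.

Definition primal_adj (D V E : finType) (alpha : {perm D}) (vert : D -> V)
  (edge : D -> E) (xi : {set E}) : rel V :=
  fun v w => [exists d, [&& edge d \in xi, vert d == v & vert (alpha d) == w]].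

Definition dual_adj (D U E : finType) (alpha : {perm D}) (face : D -> U)
  (edge : D -> E) (xi : {set E}) : rel U :=
  fun u w => [exists d, [&& edge d \in xi, face d == u & face (alpha d) == w]].

(* number of connected components, isolated vertices included *)
Definition ncomp (T : finType) (r : rel T) : nat := n_comp r predT.

Definition fk_weight (R : realType) (E : finType) (k : {set E} -> nat)
  (q : nat) (p : R) (xi : {set E}) : R :=
  (q%:R) ^+ (k xi) * p ^+ #|xi| * (1 - p) ^+ #|~: xi|.

Definition fk_measure (R : realType) (E : finType) (k : {set E} -> nat)
  (q : nat) (p : R) (xi : {set E}) : R :=
  fk_weight k q p xi / \sum_(z : {set E}) fk_weight k q p z.

Section Model.
Variables (R : realType) (D V E U : finType) (alpha sigma : {perm D})
  (vert : D -> V) (edge : D -> E) (face : D -> U)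
  (Q Q' : {fset R[i]}) (a b : R).

(* eta(s) : dual edges e^* (indexed by e) whose primal e has endpoints with
   different spins *)
Definition eta_primal (s : {ffun V -> Q}) : {set E} :=
  [set e | [exists d, (edge d == e) && (val (s (vert d)) != val (s (vert (alpha d))))]].

Definition eta_dual (s' : {ffun U -> Q'}) : {set E} :=
  [set e | [exists d, (edge d == e) && (val (s' (face d)) != val (s' (face (alpha d))))]].

Definition in_Sigma (s : {ffun V -> Q}) (s' : {ffun U -> Q'}) : bool :=
  [disjoint eta_primal s & eta_dual s'].

Definition spin_weight (s : {ffun V -> Q}) (s' : {ffun U -> Q'}) : R :=
  if in_Sigma s s' then a ^+ #|eta_dual s'| * b ^+ #|eta_primal s| else 0.

Definition spin_Z : R :=
  \sum_(s : {ffun V -> Q}) \sum_(s' : {ffun U -> Q'}) spin_weight s s'.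

(* conditional probability that e is open (o) and e^* is open (o') *)
Definition pair_prob (s : {ffun V -> Q}) (s' : {ffun U -> Q'}) (e : E)
  (o o' : bool) : R :=
  if e \in eta_dual s' then (if o && ~~ o' then 1 else 0)
  else if e \in eta_primal s then (if ~~ o && o' then 1 else 0)
  else if a + b <= 1 then
    match o, o' with
    | true, false => a | false, true => b
    | true, true => 1 - a - b | false, false => 0 end
  else
    match o, o' with
    | true, false => 1 - b | false, true => 1 - a
    | false, false => a + b - 1 | true, true => 0 end.

(* joint law of (omega, omega'); omega' is a set of dual edges, indexed by E *)
Definition perc_law (xi xi' : {set E}) : R :=
  \sum_(s : {ffun V -> Q}) \sum_(s' : {ffun U -> Q'})
     (spin_weight s s' / spin_Z) * \prod_(e : E) pair_prob s s' e (e \in xi) (e \in xi').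

Definition law_omega (xi : {set E}) : R := \sum_(xi' : {set E}) perc_law xi xi'.
Definition law_omega' (xi' : {set E}) : R := \sum_(xi : {set E}) perc_law xi xi'.

End Model.

Definition increasing (E : finType) (A : {set {set E}}) : bool :=
  [forall x : {set E}, forall y : {set E}, (x \in A) && (x \subset y) ==> (y \in A)].

Definition stoch_dominates (R : realType) (E : finType) (mu nu : {set E} -> R) : Prop :=
  forall A : {set {set E}}, increasing A ->
    \sum_(xi in A) nu xi <= \sum_(xi in A) mu xi.

(* Main.v *)
Require Import Defs.
From HB Require Import structures.
From mathcomp Require Import all_boot all_order all_algebra.
From mathcomp Require Import fingroup perm finmap complex reals.
From mathcomp Require Import lra ring zify.
Import Order.TTheory GRing.Theory Num.Theory.
Set Implicit Arguments. Unset Strict Implicit. Unset Printing Implicit Defensive.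

Section OneEdge.
Variables (T : finType) (r : rel T) (u v : T).
Hypothesis symr : symmetric r.
Definition addE : rel T := fun x y => [|| r x y, (x == u) && (y == v) | (x == v) && (y == u)].

Lemma addE_sym : symmetric addE.
Proof.
move=> x y; rewrite /addE symr; congr (_ || _); rewrite orbC.
by congr (_ || _); rewrite andbC.
Qed.

Let csr := sym_connect_sym symr.
Let csr' := sym_connect_sym addE_sym.

Definition Cset : pred T := fun x => connect r x u || connect r x v.

Lemma Cset_conn x y : connect r x y -> (x \in Cset) = (y \in Cset).
Proof.
move=> cxy; rewrite !unfold_in /Cset.
apply/idP/idP => /orP[] h.
- by rewrite (connect_trans _ h) // csr.
- by rewrite (connect_trans _ h) ?orbT // csr.
- by rewrite (connect_trans cxy h).
- by rewrite (connect_trans cxy h) ?orbT.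
Qed.

Arguments Cset_conn {x y}.
Lemma r_sub : subrel r addE.
Proof. by move=> x y h; rewrite /addE h. Qed.

Lemma conn_sub x y : connect r x y -> connect addE x y.
Proof. apply: connect_sub => a b h; apply: connect1; exact: r_sub. Qed.

Arguments conn_sub {x y}.
Lemma conn_uv : connect addE u v.
Proof. by apply: connect1; rewrite /addE !eqxx orbT. Qed.

Lemma Cset_conn' x y : x \in Cset -> y \in Cset -> connect addE x y.
Proof.
have hu : forall z, z \in Cset -> connect addE z u.
  move=> z; rewrite unfold_in => /orP[] h; first exact: conn_sub.
  by apply: connect_trans (conn_sub h) _; rewrite csr' conn_uv.
by move=> /hu hx /hu hy; apply: connect_trans hx _; rewrite csr'.
Qed.

Lemma conn_addE x y :
  connect addE x y = connect r x y || (x \in Cset) && (y \in Cset).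
Proof.
apply/idP/idP; last first.
  by case/orP => [/conn_sub //| /andP[]]; apply: Cset_conn'.
set a : pred T := fun w => connect r x w || (x \in Cset) && (w \in Cset).
have cl : closed addE a.
  apply: intro_closed => // p t hyz; rewrite [p \in a]unfold_in [t \in a]unfold_in /a.
  have uC : u \in Cset by rewrite unfold_in /Cset connect0.
  have vC : v \in Cset by rewrite unfold_in /Cset connect0 orbT.
  case/orP: hyz => [rpt|/orP[]/andP[/eqP ep /eqP et]].
  - case/orP => [cxp|/andP[-> pC]].
      by rewrite (connect_trans cxp (connect1 rpt)).
    by rewrite -(Cset_conn (connect1 rpt)) pC orbT.
  - subst p t; case/orP => [cxu|/andP[-> _]]; last by rewrite vC orbT.
    have -> : x \in Cset by rewrite unfold_in /Cset cxu.
    by rewrite vC orbT.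
  - subst p t; case/orP => [cxv|/andP[-> _]]; last by rewrite uC orbT.
    have -> : x \in Cset by rewrite unfold_in /Cset cxv orbT.
    by rewrite uC orbT.
move=> cxy; have := closed_connect cl cxy.
by rewrite [x \in a]unfold_in [y \in a]unfold_in /a connect0 => <-.
Qed.

Lemma n_comp_addE :
  n_comp r predT = (n_comp addE predT + ~~ connect r u v)%N.
Proof.
have eT : forall e, n_comp e predT = n_comp e T by move=> e; apply: eq_n_comp_r.
rewrite !eT (n_compC Cset r) (n_compC Cset addE).
have -> : n_comp r Cset = (~~ connect r u v).+1.
  rewrite -(n_comp_closure2 csr); apply: eq_n_comp_r => x.
  rewrite unfold_in /Cset; apply/idP/idP.
    case/orP=> h; apply/pred0Pn; [exists u | exists v]; by rewrite !inE /= h eqxx ?orbT.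
  case/pred0Pn => y /andP[/= hxy]; rewrite !inE => /orP[] /eqP <-; rewrite -[y \in _]/(connect r x y) in hxy; by rewrite hxy ?orbT.
have -> : n_comp addE Cset = 1%N.
  rewrite -(n_comp_connect csr' u); apply: eq_n_comp_r => x.
  rewrite -[x \in connect addE u]/(connect addE u x) conn_addE.
  have -> : u \in Cset by rewrite unfold_in /Cset connect0.
  rewrite /=; apply/idP/idP => [->|/orP[]//]; first by rewrite orbT.
  by move/Cset_conn => <-; rewrite unfold_in /Cset connect0.
have -> : n_comp r [predC Cset] = n_comp addE [predC Cset].
  apply: eq_card => x; rewrite !inE; case xC: (x \in Cset); rewrite ?andbF ?andbT //.
  rewrite /roots /root; congr (odflt _ _ == _); apply: eq_pick => y.
  by rewrite conn_addE xC orbF.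
by rewrite addSn add1n addnC.
Qed.
End OneEdge.
Section Count.
Variables (T B : finType) (r : rel T).
Hypothesis csr : connect_sym r.

Definition RT := {x : T | roots r x}.
Definition rootRT (x : T) : RT := exist _ (fingraph.root r x) (roots_root csr x).
Definition phiC (g : {ffun RT -> B}) : {ffun T -> B} := [ffun x => g (rootRT x)].

Lemma phiC_inj : injective phiC.
Proof.
move=> g1 g2 e; apply/ffunP => y.
have ey : rootRT (val y) = y.
  by apply: val_inj => /=; apply/eqP; case: y.
by rewrite -ey -!(ffunE (fun x => _ (rootRT x))) -/(phiC g1) -/(phiC g2) e.
Qed.

Lemma count_compat :
  #|[pred f : {ffun T -> B} | [forall x, forall y, r x y ==> (f x == f y)]]| =
  (#|B| ^ n_comp r predT)%N.
Proof.
have -> : (n_comp r predT = #|{: RT}|)%N.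
  by rewrite card_sig; apply: eq_card => x; rewrite !inE andbT.
rewrite -card_ffun -(card_codom phiC_inj); apply: eq_card => f.
rewrite inE; apply/idP/codomP.
  move=> /forallP H; exists [ffun y : RT => f (val y)]; apply/ffunP => x.
  rewrite !ffunE /=.
  have cl : closed r [pred z | f z == f x].
    by move=> y z ryz; rewrite !inE; have /forallP/(_ z)/implyP/(_ ryz)/eqP -> := H y.
  by have := closed_connect cl (connect_root r x); rewrite !inE eqxx => /esym/eqP.
move=> [g ->]; apply/forallP => x; apply/forallP => y; apply/implyP => rxy.
rewrite !ffunE; apply/eqP; congr (g _); apply: val_inj => /=.
by move: (connect1 rxy) => /(fingraph.rootP csr).
Qed.
End Count.

Local Open Scope ring_scope.

Lemma four1 (R : realFieldType) (a0 a1 b0 b1 c0 c1 d0 d1 : R) :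
  0 <= a0 -> 0 <= a1 -> 0 <= b0 -> 0 <= b1 -> 0 <= c0 -> 0 <= c1 -> 0 <= d0 -> 0 <= d1 ->
  a0*b0 <= c0*d0 -> a0*b1 <= c1*d0 -> a1*b0 <= c1*d0 -> a1*b1 <= c1*d1 ->
  (a0+a1)*(b0+b1) <= (c0+c1)*(d0+d1).
Proof.
move=> ha0 ha1 hb0 hb1 hc0 hc1 hd0 hd1 h1 h2 h3 h4.
set u := a0*b1; set v := a1*b0; set w := c1*d0; set X := c0*d1.
have hu : 0 <= u by rewrite mulr_ge0.
have hv : 0 <= v by rewrite mulr_ge0.
have hX : 0 <= X by rewrite mulr_ge0.
have key : u + v <= w + X.
  have [w0|wpos] := eqVneq w 0.
    have u0 : u = 0 by apply/le_anti; rewrite hu -w0 h2.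
    have v0 : v = 0 by apply/le_anti; rewrite hv -w0 h3.
    by rewrite u0 v0 w0 addr0 add0r.
  have wp : 0 < w by rewrite lt_def wpos mulr_ge0.
  have uv : u * v <= w * X.
    have -> : u * v = (a0*b0)*(a1*b1) by rewrite /u /v; ring.
    have -> : w * X = (c0*d0)*(c1*d1) by rewrite /w /X; ring.
    by apply: ler_pM => //; rewrite mulr_ge0.
  have h5 : 0 <= (w - u) * (w - v) by rewrite mulr_ge0 // subr_ge0.
  rewrite -(ler_pM2l wp).
  have -> : w * (u + v) = w * w + u * v - (w - u) * (w - v) by ring.
  have -> : w * (w + X) = w * w + w * X by ring.
  rewrite lerBlDr; apply: (le_trans (_ : _ <= w * w + w * X)).
    by rewrite lerD2l.
  by rewrite lerDl.
have -> : (a0+a1)*(b0+b1) = a0*b0 + a1*b1 + (u + v) by rewrite /u /v; ring.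
have -> : (c0+c1)*(d0+d1) = c0*d0 + c1*d1 + (w + X) by rewrite /w /X; ring.
rewrite lerD //; exact: lerD.
Qed.

Section Sets.
Variables (R : realFieldType) (E : finType).

Lemma sum_subset_split (f : {set E} -> R) (F : {set E}) n : n \in F ->
  \sum_(x : {set E} | x \subset F) f x = \sum_(x : {set E} | x \subset F :\ n) (f x + f (n |: x)).
Proof.
move=> nF; rewrite big_split /= (bigID (fun x : {set E} => n \in x)) /= addrC; congr (_ + _).
  by apply: eq_bigl => x; rewrite subsetD1.
rewrite (reindex_onto (fun y => n |: y) (fun x => x :\ n)) /=; last first.
  by move=> x /andP[_ nx]; rewrite setD1K.
apply: eq_bigl => y /=; rewrite subUset sub1set nF setU11 /=.
apply/idP/idP.
  rewrite andbT => /andP[yF /eqP e]; rewrite -e; apply: setSD.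
  by rewrite subUset sub1set nF yF.
rewrite subsetD1 => /andP[yF ny]; rewrite yF /= setU1K //.
Qed.

Lemma sum_subset0 (f : {set E} -> R) : \sum_(x : {set E} | x \subset set0) f x = f set0.
Proof. by rewrite (eq_bigl (pred1 set0)) ?big_pred1_eq // => x; rewrite subset0. Qed.

Lemma fourfun n : forall (F : {set E}) (al be ga de : {set E} -> R), #|F| = n ->
  (forall x, 0 <= al x) -> (forall x, 0 <= be x) ->
  (forall x, 0 <= ga x) -> (forall x, 0 <= de x) ->
  (forall x y : {set E}, x \subset F -> y \subset F -> al x * be y <= ga (x :|: y) * de (x :&: y)) ->
  (\sum_(x : {set E} | x \subset F) al x) * (\sum_(x : {set E} | x \subset F) be x) <=
  (\sum_(x : {set E} | x \subset F) ga x) * (\sum_(x : {set E} | x \subset F) de x).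
Proof.
elim: n => [|n IH] F al be ga de cF h0 h1 h2 h3 H.
  move/eqP: cF; rewrite cards_eq0 => /eqP ->; rewrite !sum_subset0.
  by have := H set0 set0; rewrite setU0 setI0 !sub0set; apply.
have [m mF] : exists m, m \in F.
  by apply/set0Pn; rewrite -card_gt0 cF.
rewrite !(sum_subset_split _ mF).
apply: (IH (F :\ m)) => //.
- by move: cF; rewrite (cardsD1 m F) mF add1n => -[].
- by move=> x; rewrite addr_ge0.
- by move=> x; rewrite addr_ge0.
- by move=> x; rewrite addr_ge0.
- by move=> x; rewrite addr_ge0.
move=> x y; rewrite !subsetD1 => /andP[xF mx] /andP[yF my].
have mxF : m |: x \subset F by rewrite subUset sub1set mF.
have myF : m |: y \subset F by rewrite subUset sub1set mF.
apply: four1 => //.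
- exact: H.
- have := H _ _ xF myF.
  suff [-> ->] : x :|: (m |: y) = m |: (x :|: y) /\ x :&: (m |: y) = x :&: y by [].
  split; apply/setP => z; rewrite !inE; have [->|//] := eqVneq z m; rewrite ?eqxx ?(negbTE mx) ?(negbTE my) /= ?orbT ?andbF ?andbT //.
- have := H _ _ mxF yF.
  suff [-> ->] : (m |: x) :|: y = m |: (x :|: y) /\ (m |: x) :&: y = x :&: y by [].
  split; apply/setP => z; rewrite !inE; have [->|//] := eqVneq z m; rewrite ?eqxx ?(negbTE mx) ?(negbTE my) /= ?orbT ?andbF ?andbT //.
- have := H _ _ mxF myF.
  suff [-> ->] : (m |: x) :|: (m |: y) = m |: (x :|: y) /\ (m |: x) :&: (m |: y) = m |: (x :&: y) by [].
  split; apply/setP => z; rewrite !inE; have [->|//] := eqVneq z m; rewrite ?eqxx ?(negbTE mx) ?(negbTE my) /= ?orbT ?andbF ?andbT //.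
Qed.
End Sets.

Unset Implicit Arguments. Set Strict Implicit.

Section Graph.
Variables (D V E : finType) (alpha : {perm D}) (vert : D -> V) (edge : D -> E).
Hypothesis Hinv : forall d, alpha (alpha d) = d.
Hypothesis Hedge : forall d d', edge d = edge d' <-> (d' = d \/ d' = alpha d).

Local Notation adj := (primal_adj alpha vert edge).
Local Notation k xi := (ncomp (primal_adj alpha vert edge xi)).

Lemma edge_alpha d : edge (alpha d) = edge d.
Proof. by apply/esym/Hedge; right. Qed.

Lemma adj_sym xi : symmetric (adj xi).
Proof.
move=> x y; apply/existsP/existsP => -[d /and3P[h1 h2 h3]]; exists (alpha d);
  by rewrite edge_alpha h1 Hinv h2 h3.
Qed.

Lemma adj_add xi e d0 : edge d0 = e ->
  adj (e |: xi) =2 addE (adj xi) (vert d0) (vert (alpha d0)).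
Proof.
move=> ed0 x y; rewrite /addE; apply/idP/idP.
  case/existsP => d /and3P[]; rewrite in_setU1 => /orP[/eqP ed | ein] hx hy.
    rewrite -ed0 in ed; case: (proj1 (Hedge d0 d) (esym ed)) => dd; subst d.
      by rewrite (eqP hx) (eqP hy) !eqxx orbT.
    by rewrite Hinv in hy; rewrite (eqP hx) (eqP hy) !eqxx !orbT.
  by apply/orP; left; apply/existsP; exists d; rewrite ein hx hy.
case/or3P.
- case/existsP => d /and3P[h1 h2 h3]; apply/existsP; exists d.
  by rewrite in_setU1 h1 orbT h2 h3.
- case/andP => /eqP -> /eqP ->; apply/existsP; exists d0.
  by rewrite in_setU1 ed0 !eqxx.
- case/andP => /eqP -> /eqP ->; apply/existsP; exists (alpha d0).
  by rewrite in_setU1 edge_alpha ed0 Hinv !eqxx.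
Qed.

Lemma k_add xi e d0 : edge d0 = e ->
  k xi = (k (e |: xi) + ~~ connect (adj xi) (vert d0) (vert (alpha d0)))%N.
Proof.
move=> ed0; rewrite /ncomp (n_comp_addE (vert d0) (vert (alpha d0)) (adj_sym xi)); congr (_ + _)%N.
apply: eq_n_comp => x y; apply: eq_connect => z t; by rewrite (adj_add xi _ _ ed0).
Qed.

Lemma adj_mono (z w : {set E}) : z \subset w -> subrel (adj z) (adj w).
Proof.
move=> zw x y /existsP[d /and3P[h1 h2 h3]]; apply/existsP; exists d.
by rewrite (subsetP zw _ h1) h2 h3.
Qed.

Hypothesis Hsurj : forall e, exists d, edge d = e.

Lemma k_mono (z w : {set E}) e : z \subset w -> (k w + k (e |: z) <= k z + k (e |: w))%N.
Proof.
move=> zw; have [d0 ed0] := Hsurj e.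
rewrite (k_add z _ _ ed0) (k_add w _ _ ed0).
set u := vert d0; set v := vert (alpha d0).
have : connect (adj z) u v ==> connect (adj w) u v.
  apply/implyP; apply: connect_sub => x y h; apply: connect1; exact: adj_mono h.
case: (connect (adj z) u v); case: (connect (adj w) u v) => //= _; lia.
Qed.

Lemma k_supermod n : forall x y : {set E}, #|y :\: x| = n ->
  (k x + k y <= k (x :|: y) + k (x :&: y))%N.
Proof.
elim: n => [|n IH] x y hc.
  move/eqP: hc; rewrite cards_eq0 setD_eq0 => yx.
  by rewrite (setUidPl yx) (setIidPr yx).
have [e eyx] : exists e, e \in y :\: x by apply/set0Pn; rewrite -card_gt0 hc.
move: (eyx); rewrite inE => /andP[ex ey].
set y0 := y :\ e.
have hc0 : #|y0 :\: x| = n.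
  have : y0 :\: x = (y :\: x) :\ e by apply/setP => z; rewrite !inE; case: (z == e) => //; rewrite !andbF.
  by move=> ->; move: hc; rewrite (cardsD1 e (y :\: x)) eyx add1n => -[].
have IH0 := IH x y0 hc0.
have ey0 : y = e |: y0 by rewrite setD1K.
have e1 : x :&: y0 = x :&: y.
  apply/setP => z; rewrite !inE; have [->|//] := eqVneq z e; by rewrite (negbTE ex).
have e2 : x :|: y = e |: (x :|: y0).
  by rewrite ey0 setUCA.
have hm := k_mono _ _ e (subsetUr x y0).
rewrite e1 in IH0; rewrite -ey0 -e2 in hm.
lia.
Qed.

Lemma k_supermod2 x y : (k x + k y <= k (x :|: y) + k (x :&: y))%N.
Proof. exact: (@k_supermod _ x y erefl). Qed.
End Graph.

Lemma sum_set_prod {R : comRingType} {E : finType} (F : E -> bool -> R) :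
  \sum_(X : {set E}) \prod_(e : E) F e (e \in X) = \prod_(e : E) (F e true + F e false).
Proof.
have -> : \prod_(e : E) (F e true + F e false) = \prod_(e : E) \sum_(j : bool) F e j.
  by apply: eq_bigr => e _; rewrite big_bool.
rewrite bigA_distr_bigA /=.
rewrite (reindex (fun f : {ffun E -> bool} => [set e | f e])) /=; last first.
  exists (fun X : {set E} => [ffun e => e \in X]) => [f _|X _].
    by apply/ffunP => e; rewrite ffunE inE.
  by apply/setP => e; rewrite inE ffunE.
apply: eq_bigr => f _; apply: eq_bigr => e _; by rewrite inE.
Qed.

Lemma prod_bool {R : comRingType} {I : finType} (P B : pred I) :
  \prod_(i | P i) ((B i)%:R : R) = ([forall i, P i ==> B i])%:R.
Proof.
case: (boolP [forall i, P i ==> B i]) => [/forallP H|].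
  by rewrite big1 // => i /(implyP (H i)) ->.
rewrite negb_forall; case/existsP => i; rewrite negb_imply => /andP[Pi Bi].
by rewrite (bigD1 i) //= (negbTE Bi) mul0r.
Qed.

Lemma sum_ge_term {R : numDomainType} {I : finType} (F : I -> R) i0 :
  (forall i, 0 <= F i) -> F i0 <= \sum_i F i.
Proof.
move=> h; rewrite (bigD1 i0) //= lerDl; apply: sumr_ge0 => i _; exact: h.
Qed.

Definition pp_gen {R : realFieldType} (a b : R) (inS inP o o' : bool) : R :=
  if inS then (if o && ~~ o' then 1 else 0)
  else if inP then (if ~~ o && o' then 1 else 0)
  else if a + b <= 1 then
    match o, o' with
    | true, false => a | false, true => b
    | true, true => 1 - a - b | false, false => 0 end
  else
    match o, o' with
    | true, false => 1 - b | false, true => 1 - a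
    | false, false => a + b - 1 | true, true => 0 end.

Lemma edge_id (R : realFieldType) (a b : R) (inS inP o : bool) : ~~ (inP && inS) ->
  (if inP then b else 1) * (pp_gen a b inS inP o true + pp_gen a b inS inP o false) =
  (inP ==> ~~ o)%:R * (if inS then (o : nat)%:R else (if o then 1 - b else b)).
Proof.
rewrite /pp_gen; case: inS; case: inP; case: o; case: (a + b <= 1) => //= _;
  rewrite ?mul1r ?mulr1 ?mul0r ?mulr0 ?addr0 ?add0r //; ring.
Qed.

Lemma pp_tot (R : realFieldType) (a b : R) (inS inP : bool) :
  pp_gen a b inS inP true true + pp_gen a b inS inP true false +
  (pp_gen a b inS inP false true + pp_gen a b inS inP false false) = 1.
Proof.
rewrite /pp_gen; case: inS; case: inP; case: (a + b <= 1) => /=;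
  rewrite ?addr0 ?add0r //; ring.
Qed.

Section Model.
Variables (R : realType) (D V E U : finType) (alpha : {perm D})
  (vert : D -> V) (edge : D -> E) (face : D -> U)
  (Q Q' : {fset R[i]}) (a b : R) (q : nat).
Hypothesis Hinv : forall d, alpha (alpha d) = d.
Hypothesis Hedge : forall d d', edge d = edge d' <-> (d' = d \/ d' = alpha d).
Hypothesis Hsurj : forall e, exists d, edge d = e.
Hypothesis HQ : #|{: Q}| = q.
Hypothesis hq : (1 <= q)%N.
Hypothesis HQ' : (0 < #|{: Q'}|)%N.
Hypothesis ha : 0 <= a.
Hypothesis hb0 : 0 < b.
Hypothesis hb1 : b <= 1.

Local Notation adj := (primal_adj alpha vert edge).
Local Notation k xi := (ncomp (primal_adj alpha vert edge xi)).
Local Notation etaP := (eta_primal alpha vert edge).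
Local Notation etaD := (eta_dual alpha edge face).
Local Notation pp := (pair_prob alpha vert edge face a b).
Local Notation sw := (spin_weight alpha vert edge face a b).
Local Notation Zs := (spin_Z alpha vert edge face Q Q' a b).
Local Notation law := (law_omega alpha vert edge face Q Q' a b).

Definition g (o : bool) : R := if o then 1 - b else b.
Definition W (T xi : {set E}) : R :=
  (q%:R ^+ k xi) * ((T \subset xi)%:R * \prod_(e | e \notin T) g (e \in xi)).
Definition compat (xi : {set E}) (s : {ffun V -> Q}) :=
  [forall e, (e \in etaP s) ==> (e \notin xi)].

Lemma g_ge0 o : 0 <= g o.
Proof. by rewrite /g; case: o => /=; [rewrite subr_ge0|apply: ltW]. Qed.

Lemma W_ge0 T xi : 0 <= W T xi.
Proof.
rewrite /W; apply: mulr_ge0; first by rewrite exprn_ge0.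
by apply: mulr_ge0; [case: (_ \subset _)|apply: prodr_ge0 => e _; exact: g_ge0].
Qed.

Lemma sw_ge0 (s : {ffun V -> Q}) (s' : {ffun U -> Q'}) : 0 <= sw s s'.
Proof.
rewrite /spin_weight; case: ifP => // _; apply: mulr_ge0; apply: exprn_ge0 => //; exact: ltW.
Qed.

Lemma compatE xi s :
  compat xi s = [forall x, forall y, adj xi x y ==> (s x == s y)].
Proof.
apply/forallP/forallP => H.
  move=> x; apply/forallP => y; apply/implyP => /existsP[d /and3P[h1 /eqP h2 /eqP h3]].
  apply/negPn/negP => nxy; have := H (edge d); rewrite h1 implybF => /negP; apply.
  rewrite inE; apply/existsP; exists d; rewrite eqxx h2 h3 /=.
  by rewrite val_eqE.
move=> e; apply/implyP; rewrite inE => /existsP[d /andP[/eqP ed hd]].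
apply/negP => exi; have /forallP/(_ (vert (alpha d)))/implyP := H (vert d).
rewrite -val_eqE (negbTE hd) => h; suff : false by []; apply: h; apply/existsP; exists d.
by rewrite ed exi !eqxx.
Qed.

Lemma count_spins xi : \sum_(s : {ffun V -> Q}) ((compat xi s)%:R : R) = q%:R ^+ k xi.
Proof.
rewrite -natr_sum -natrX; congr (_ %:R).
rewrite -HQ -(count_compat Q (sym_connect_sym (adj_sym _ _ _ _ vert edge Hinv Hedge xi))) -sum1_card.
rewrite [RHS]big_mkcond; apply: eq_bigr => s _; rewrite inE /= compatE; by case: ifP.
Qed.

Lemma ppE (s : {ffun V -> Q}) (s' : {ffun U -> Q'}) e o o' :
  pp s s' e o o' = pp_gen a b (e \in etaD s') (e \in etaP s) o o'.
Proof. by []. Qed.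

Lemma term_eq (xi : {set E}) (s : {ffun V -> Q}) (s' : {ffun U -> Q'}) :
  sw s s' * \prod_e (pp s s' e (e \in xi) true + pp s s' e (e \in xi) false) =
  a ^+ #|etaD s'| * ((compat xi s)%:R *
     ((etaD s' \subset xi)%:R * \prod_(e | e \notin etaD s') g (e \in xi))).
Proof.
have cmp : (compat xi s)%:R = \prod_e ((e \in etaP s) ==> (e \notin xi))%:R :> R.
  by rewrite prod_bool; congr (_ %:R); apply: eq_forallb => e.
have sub : (etaD s' \subset xi)%:R * \prod_(e | e \notin etaD s') g (e \in xi) =
    \prod_e (if e \in etaD s' then ((e \in xi) : nat)%:R else g (e \in xi)) :> R.
  rewrite [RHS](bigID (fun e => e \in etaD s')) /=; congr (_ * _); last first.
    by apply: eq_bigr => e /negbTE ->.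
  rewrite (eq_bigr (fun e => ((e \in xi) : nat)%:R)); last by move=> e ->.
  rewrite prod_bool; congr ((nat_of_bool _) %:R); apply/subsetP/forallP => H e.
    by apply/implyP; apply: H.
  exact: (implyP (H e)).
rewrite /spin_weight; case: ifP => HS.
  rewrite -mulrA; congr (_ * _).
  rewrite -prodr_const big_mkcond /= -big_split /= cmp sub -big_split /=.
  apply: eq_bigr => e _; rewrite !ppE edge_id //.
  apply/andP => -[h1 h2]; by rewrite (disjointFr HS h1) in h2.
rewrite mul0r; case: (boolP (compat xi s)) => C; last by rewrite mul0r mulr0.
case: (boolP (etaD s' \subset xi)) => Sb; last by rewrite mul0r !mulr0.
exfalso; move: HS; rewrite /in_Sigma => /negbT/negP; apply.
apply/pred0P => e /=; apply/negbTE/negP => /andP[h1 h2].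
have := forallP C e; rewrite h1 /= => /negP; apply; exact: (subsetP Sb e h2).
Qed.

Lemma law_formula xi : law xi =
  Zs^-1 * \sum_(s' : {ffun U -> Q'}) a ^+ #|etaD s'| * W (etaD s') xi.
Proof.
rewrite /law_omega /perc_law exchange_big /=.
under eq_bigr => s _ do rewrite exchange_big /=.
under eq_bigr => s _ do under eq_bigr => s' _ do
  rewrite -mulr_sumr (sum_set_prod (fun e o' => pp s s' e (e \in xi) o')) mulrAC term_eq.
under eq_bigr => s _ do rewrite -mulr_suml.
rewrite -mulr_suml mulrC; congr (_ * _).
rewrite exchange_big; apply: eq_bigr => s' _ /=.
by rewrite -mulr_sumr -mulr_suml count_spins.
Qed.

Lemma Z_gt0 : 0 < Zs.
Proof.
have : (0 < #|{: Q}|)%N by rewrite HQ.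
case/card_gt0P => x0 _; case/card_gt0P: HQ' => y0 _.
pose s0 := [ffun _ : V => x0]; pose s0' := [ffun _ : U => y0].
have e0 : etaP s0 = set0.
  by apply/setP => e; rewrite !inE; apply/negbTE/existsP => -[d]; rewrite !ffunE eqxx andbF.
have e0' : etaD s0' = set0.
  by apply/setP => e; rewrite !inE; apply/negbTE/existsP => -[d]; rewrite !ffunE eqxx andbF.
have HS : in_Sigma alpha vert edge face s0 s0'.
  by rewrite /in_Sigma e0; apply/pred0P => e; rewrite /= inE.
have w1 : sw s0 s0' = 1 by rewrite /spin_weight HS e0 e0' !cards0 !expr0 mulr1.
apply: (lt_le_trans ltr01); rewrite -w1 /spin_Z.
apply: (le_trans _ (sum_ge_term (fun s => \sum_s' sw s s') s0 _)).
  exact: (sum_ge_term (fun s' => sw s0 s') s0' (sw_ge0 s0)).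
by move=> s; apply: sumr_ge0 => s' _; exact: sw_ge0.
Qed.

Lemma prod_pp_tot (s : {ffun V -> Q}) (s' : {ffun U -> Q'}) :
  \prod_e (pp s s' e true true + pp s s' e true false +
     (pp s s' e false true + pp s s' e false false)) = 1.
Proof. by rewrite big1 // => e _; rewrite !ppE pp_tot. Qed.

Lemma law_tot : \sum_xi law xi = 1.
Proof.
rewrite /law_omega /perc_law.
under eq_bigr => xi _ do rewrite exchange_big /=.
under eq_bigr => xi _ do under eq_bigr => s _ do rewrite exchange_big /=.
under eq_bigr => xi _ do under eq_bigr => s _ do under eq_bigr => s' _ do
  rewrite -mulr_sumr (sum_set_prod (fun e o' => pp s s' e (e \in xi) o')).
rewrite exchange_big /=.
under eq_bigr => s _ do rewrite exchange_big /=.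
under eq_bigr => s _ do under eq_bigr => s' _ do
  rewrite -mulr_sumr (sum_set_prod (fun e o => pp s s' e o true + pp s s' e o false)).
under eq_bigr => s _ do under eq_bigr => s' _ do rewrite (prod_pp_tot s s') mulr1.
under eq_bigr => s _ do rewrite -mulr_suml.
by rewrite -mulr_suml -/Zs mulfV // gt_eqF // Z_gt0.
Qed.

Definition PT (T z : {set E}) : R := \prod_(e | e \notin T) g (e \in z).

Lemma P0E z : PT set0 z = \prod_e g (e \in z).
Proof. by apply: eq_bigl => e; rewrite inE. Qed.

Lemma P_id (T x y : {set E}) : T \subset y ->
  PT set0 x * PT T y = PT T (x :|: y) * PT set0 (x :&: y).
Proof.
move=> Ty; rewrite !P0E /PT.
rewrite !(bigID (fun e => e \in T) predT) /=.
have -> : \prod_(e | true && (e \in T)) g (e \in x) = \prod_(e | true && (e \in T)) g (e \in x :&: y).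
  by apply: eq_bigr => e /= eT; rewrite inE (subsetP Ty e eT) andbT.
rewrite -!mulrA [RHS]mulrCA; congr (_ * _).
rewrite -!big_split /=; apply: eq_bigr => e _; rewrite !inE.
by case: (e \in x); case: (e \in y) => //=; rewrite mulrC.
Qed.

Lemma W_split (T z : {set E}) : T \subset z -> W T z = q%:R ^+ k z * PT T z.
Proof. by move=> h; rewrite /W h mul1r. Qed.

Lemma W_key (T x y : {set E}) : T \subset y ->
  W set0 x * W T y <= W T (x :|: y) * W set0 (x :&: y).
Proof.
move=> Ty; have Txy : T \subset x :|: y by apply: subset_trans Ty (subsetUr _ _).
rewrite !W_split ?sub0set //.
have -> : q%:R ^+ k x * PT set0 x * (q%:R ^+ k y * PT T y) =
    (q%:R ^+ k x * q%:R ^+ k y) * (PT set0 x * PT T y).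
  by rewrite -!mulrA; congr (_ * _); rewrite mulrCA.
have -> : q%:R ^+ k (x :|: y) * PT T (x :|: y) * (q%:R ^+ k (x :&: y) * PT set0 (x :&: y)) =
    (q%:R ^+ k (x :|: y) * q%:R ^+ k (x :&: y)) * (PT T (x :|: y) * PT set0 (x :&: y)).
  by rewrite -!mulrA; congr (_ * _); rewrite mulrCA.
rewrite P_id //; apply: ler_wpM2r.
  by apply: mulr_ge0; apply: prodr_ge0 => e _; exact: g_ge0.
rewrite -!exprD; apply: ler_weXn2l; first by rewrite ler1n.
exact: (k_supermod2 _ _ _ _ vert edge Hinv Hedge Hsurj).
Qed.

Lemma holley (T : {set E}) (A : {set {set E}}) : increasing A ->
  (\sum_(xi in A) W set0 xi) * (\sum_xi W T xi) <=
  (\sum_(xi in A) W T xi) * (\sum_xi W set0 xi).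
Proof.
move=> incA.
have sT : forall f : {set E} -> R, \sum_(x : {set E} | x \subset setT) f x = \sum_x f x.
  by move=> f; apply: eq_bigl => x; rewrite subsetT.
have sA : forall f : {set E} -> R, \sum_(x in A) f x = \sum_x f x * (x \in A)%:R.
  move=> f; rewrite big_mkcond; apply: eq_bigr => x _.
  by case: (x \in A); rewrite ?mulr1 ?mulr0.
rewrite !sA -!sT.
apply: fourfun => //.
- by move=> x; apply: mulr_ge0 => //; exact: W_ge0.
- exact: W_ge0.
- by move=> x; apply: mulr_ge0 => //; exact: W_ge0.
- exact: W_ge0.
move=> x y _ _; case: (boolP (x \in A)) => xA; last first.
  by rewrite mulr0 mul0r; apply: mulr_ge0; [apply: mulr_ge0|]; rewrite ?W_ge0.
have xyA : x :|: y \in A.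
  by move/forallP: incA => /(_ x)/forallP/(_ (x :|: y)); rewrite xA subsetUl => /implyP; apply.
rewrite xyA !mulr1; case: (boolP (T \subset y)) => Ty; first exact: W_key.
have -> : W T y = 0 by rewrite /W (negbTE Ty) mul0r mulr0.
by rewrite mulr0; apply: mulr_ge0; exact: W_ge0.
Qed.

Lemma W0_fk xi : W set0 xi = fk_weight (fun xi => k xi) q (1 - b) xi.
Proof.
rewrite /W /fk_weight sub0set mul1r -mulrA; congr (_ * _).
have -> : 1 - (1 - b) = b by rewrite opprB addrC subrK.
rewrite -/(PT set0 xi) P0E (bigID (fun e => e \in xi)) /=.
rewrite (eq_bigr (fun _ => 1 - b)); last by move=> e ->.
rewrite (eq_bigr (fun _ => b)); last by move=> e /negbTE ->.
rewrite prodr_const; congr (_ * _); rewrite -prodr_const; apply: eq_bigl => e.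
by rewrite inE.
Qed.

Theorem dom : stoch_dominates law (fk_measure (fun xi => k xi) q (1 - b)).
Proof.
move=> A incA.
set S0 := \sum_xi W set0 xi.
have S0pos : 0 < S0.
  apply: (lt_le_trans _ (sum_ge_term (W set0) set0 (W_ge0 set0))).
  rewrite /W sub0set mul1r; apply: mulr_gt0; first by apply: exprn_gt0; rewrite ltr0n.
  by apply: prodr_gt0 => e _; rewrite inE.
have fkE : forall xi, fk_measure (fun xi => k xi) q (1 - b) xi = W set0 xi / S0.
  move=> xi; rewrite /fk_measure -W0_fk; congr (_ / _); apply: eq_bigr => z _.
  by rewrite W0_fk.
under eq_bigr => xi _ do rewrite fkE.
rewrite -mulr_suml.
under [X in _ <= X]eq_bigr => xi _ do rewrite law_formula.
rewrite -mulr_sumr exchange_big /=.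
under [X in _ <= _ * X]eq_bigr => s' _ do rewrite -mulr_sumr.
have tot : Zs^-1 * \sum_(s' : {ffun U -> Q'}) a ^+ #|etaD s'| * \sum_xi W (etaD s') xi = 1.
  rewrite -law_tot; under [RHS]eq_bigr => xi _ do rewrite law_formula.
  rewrite -mulr_sumr exchange_big /=; congr (_ * _); apply: eq_bigr => s' _.
  by rewrite mulr_sumr.
rewrite -[X in X <= _]mulr1 -tot mulrCA; apply: ler_wpM2l.
  by rewrite invr_ge0; apply: ltW; exact: Z_gt0.
rewrite mulr_sumr; apply: ler_sum => s' _.
rewrite mulrCA; apply: ler_wpM2l; first exact: exprn_ge0.
rewrite mulrAC ler_pdivrMr //; exact: holley.
Qed.
End Model.

Lemma pp_swap {R : realFieldType} (a b : R) inS inP o o' : ~~ (inS && inP) ->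
  pp_gen b a inP inS o' o = pp_gen a b inS inP o o'.
Proof.
rewrite /pp_gen addrC; case: inS; case: inP; case: o; case: o'; case: (a + b <= 1) => //= _.
all: ring.
Qed.

Lemma law_swap (R : realType) (D V E U : finType) (alpha : {perm D})
  (vert : D -> V) (edge : D -> E) (face : D -> U) (Q Q' : {fset R[i]}) (a b : R) xi' :
  law_omega' alpha vert edge face Q Q' a b xi' = law_omega alpha face edge vert Q' Q b a xi'.
Proof.
have SE : forall (s : {ffun V -> Q}) (s' : {ffun U -> Q'}), in_Sigma alpha face edge vert s' s = in_Sigma alpha vert edge face s s'.
  by move=> s s'; rewrite /in_Sigma disjoint_sym.
have wE : forall (s : {ffun V -> Q}) (s' : {ffun U -> Q'}), spin_weight alpha face edge vert b a s' s =
    spin_weight alpha vert edge face a b s s'.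
  move=> s s'; rewrite /spin_weight SE; case: ifP => // _; exact: mulrC.
have ZE : spin_Z alpha face edge vert Q' Q b a = spin_Z alpha vert edge face Q Q' a b.
  rewrite /spin_Z exchange_big; apply: eq_bigr => s _; apply: eq_bigr => s' _; exact: wE.
rewrite /law_omega' /law_omega /perc_law; apply: eq_bigr => xi _.
rewrite [RHS]exchange_big; apply: eq_bigr => s _; apply: eq_bigr => s' _ /=.
rewrite wE ZE; case HS : (in_Sigma alpha vert edge face s s'); last first.
  by rewrite /spin_weight HS !mul0r.
congr (_ * _); apply: eq_bigr => e _.
rewrite /pair_prob -/(pp_gen a b _ _ _ _) -/(pp_gen b a _ _ _ _).
symmetry; apply: pp_swap; apply/andP => -[h1 h2].
by rewrite (disjointFr HS h2) in h1.
Qed.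

Theorem lemma6p2 (R : realType) (D V E U : finType) (alpha sigma : {perm D})
  (vert : D -> V) (edge : D -> E) (face : D -> U)
  (q q' : nat) (Q Q' : {fset R[i]}) (a b : R) :
  planar_map alpha sigma vert edge face ->
  (1 <= q)%N -> (1 <= q')%N ->
  (#|` Q|)%fset = q -> (#|` Q'|)%fset = q' ->
  (forall x, (x \in Q)%fset -> (- x \in Q)%fset) -> (forall x, (x \in Q')%fset -> (- x \in Q')%fset) ->
  0 < a <= 1 -> 0 < b <= 1 ->
  stoch_dominates (law_omega alpha vert edge face Q Q' a b)
    (fk_measure (fun xi => ncomp (primal_adj alpha vert edge xi)) q (1 - b))
  /\
  stoch_dominates (law_omega' alpha vert edge face Q Q' a b)
    (fk_measure (fun xi => ncomp (dual_adj alpha face edge xi)) q' (1 - a)).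
Proof.
move=> [H1 [H2 [H3 [H4 [H5 [H6 [H7 [H8 H9]]]]]]]] hq hq' cQ cQ' _ _ /andP[a0 a1] /andP[b0 b1].
have Hinv : forall d, alpha (alpha d) = d by move=> d; case: (H1 d).
have HQ : #|{: Q}| = q by rewrite -cardfE.
have HQ' : #|{: Q'}| = q' by rewrite -cardfE.
split.
  apply: (@dom _ _ _ _ _ alpha vert edge face Q Q' a b q Hinv H3 H6 HQ hq) => //; first by rewrite HQ'.
  exact: ltW.
move=> A incA; under [X in _ <= X]eq_bigr => xi _ do rewrite law_swap.
apply: (@dom _ _ _ _ _ alpha face edge vert Q' Q b a q' Hinv H3 H6 HQ' hq') => //; first by rewrite HQ.
exact: ltW.
Qed.
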